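(* Let $G(\mathcal V,\mathcal E)$ be a finite simple directed graph with $n=|\mathcal V|\ge 2$ nodes and let $f\ge 0$ be an integer. Suppose that a correct Byzantine consensus algorithm tolerating up to $f$ Byzantine faulty nodes exists for $G(\mathcal V,\mathcal E)$. Then for every partition $L,C,R,F$ of $\mathcal V$ (some of $C,F$ possibly empty) such that $L$ and $R$ are both non-empty and $|F|\le f$, either $L\cup C\rightarrow R$ or $R\cup C\rightarrow L$.
   Context: Network model: $G(\mathcal V,\mathcal E)$ is a simple directed graph without self-loops; node $i$ can send messages directly to node $j$ if and only if $(i,j)\in\mathcal E$. The system is synchronous, links are reliable, FIFO and deliver each message exactly once within bounded time; the topology is known to all nodes. Each node has an input in $\{0,1\}$. Up to $f$ nodes may be Byzantine faulty: they may deviate arbitrarily from the algorithm, may collude, and know the whole execution state, the algorithm and the topology. An algorithm is a correct Byzantine consensus algorithm if, for every set of at most $f$ faulty nodes, every behavior of the faulty nodes and all inputs: (Agreement) all fault-free nodes output the same value; (Validity) the output of every fault-free node equals the input of some fault-free node; (Termination) every fault-free node eventually decides on an output. Notation: for disjoint sets $X,Y\subseteq\mathcal V$ with $Y$ non-empty, $X\rightarrow Y$ means $|\{i\in X : (i,j)\in\mathcal E \text{ for some } j\in Y\}|>f$, i.e. $X$ contains at least $f+1$ distinct incoming neighbors of $Y$; $X\not\rightarrow Y$ means this fails. Sets are considered disjoint if either is empty. *)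

(* Defs.v *)
From mathcomp Require Import all_boot.
Set Implicit Arguments. Unset Strict Implicit. Unset Printing Implicit Defensive.

(* Synchronous message-passing model on a directed graph (V, e):
   node i can send to j iff e i j. *)
Record algorithm (V : finType) := Algorithm {
  st : Type;
  msg : Type;
  init : V -> bool -> st;
  send : V -> nat -> st -> V -> msg;           (* send i r s j : message i -> j in round r *)
  trans : V -> nat -> st -> (V -> option msg) -> st;
     (* trans j r s rcv : new state; rcv i = Some m iff (i,j) is an edge, m received *)
  decide : V -> st -> option bool
}.

(* Execution: F = faulty set, x = inputs, byz r i j = arbitrary message sent
   by faulty i to j in round r (adversary is unrestricted). *)
Fixpoint exec (V : finType) (e : rel V) (A : algorithm V) (F : {set V})
    (x : V -> bool) (byz : nat -> V -> V -> msg A) (r : nat) : V -> st A :=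
  match r with
  | 0 => fun i => @init V A i (x i)
  | r'.+1 => fun j =>
      @trans V A j r' (@exec V e A F x byz r' j)
        (fun i => if e i j then
                    Some (if i \in F then byz r' i j
                          else @send V A i r' (@exec V e A F x byz r' i) j)
                  else None)
  end.

Definition outputs_at (V : finType) (e : rel V) (A : algorithm V) F x byz
    (i : V) (r : nat) (v : bool) : Prop :=
  @decide V A i (@exec V e A F x byz r i) = Some v /\
  forall r', r' < r -> @decide V A i (@exec V e A F x byz r' i) = None.

Definition correct_consensus (V : finType) (e : rel V) (f : nat)
    (A : algorithm V) : Prop :=
  forall (F : {set V}) (x : V -> bool) (byz : nat -> V -> V -> msg A),
    #|F| <= f ->
    (forall i j ri rj vi vj, i \notin F -> j \notin F ->
        @outputs_at V e A F x byz i ri vi -> @outputs_at V e A F x byz j rj vj ->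
        vi = vj) /\
    (forall i r v, i \notin F -> @outputs_at V e A F x byz i r v ->
        exists2 k, k \notin F & x k = v) /\
    (forall i, i \notin F -> exists r v, @outputs_at V e A F x byz i r v).

Definition consensus_possible (V : finType) (e : rel V) (f : nat) : Prop :=
  exists A : algorithm V, @correct_consensus V e f A.

(* X -> Y : X contains at least f+1 distinct incoming neighbours of Y *)
Definition reaches (V : finType) (e : rel V) (f : nat) (X Y : {set V}) : Prop :=
  f < #|[set i in X | [exists j in Y, e i j]]|.

(* Main.v *)
Require Import Defs.
From mathcomp Require Import all_boot.
From Stdlib Require Import FunctionalExtensionality.

Section Sim.
Variables (V : finType) (e : rel V) (A : algorithm V).
Variables (L R F NL NR : {set V}) (d : msg A).

Definition bE (r : nat) (s0 s1 : V -> st A) (i j : V) : msg A :=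
  if j \in L then @send V A i r (s0 i) j
  else if j \in R then @send V A i r (s1 i) j else d.

Fixpoint jt (r : nat) : (V -> st A) * (V -> st A) * (V -> st A) :=
  match r with
  | 0 => (fun i => @init V A i (i \in R), fun i => @init V A i false,
          fun i => @init V A i true)
  | r'.+1 =>
    let: (s, s0, s1) := jt r' in
    (fun j => @trans V A j r' (s j) (fun i => if e i j then
        Some (if i \in F then bE r' s0 s1 i j else @send V A i r' (s i) j) else None),
     fun j => @trans V A j r' (s0 j) (fun i => if e i j then
        Some (if i \in NL then @send V A i r' (s i) j else @send V A i r' (s0 i) j) else None),
     fun j => @trans V A j r' (s1 j) (fun i => if e i j then
        Some (if i \in NR then @send V A i r' (s i) j else @send V A i r' (s1 i) j) else None))
  end.

Definition byzE r i j := bE r (jt r).1.2 (jt r).2 i j.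
Definition byz0 r i j := @send V A i r ((jt r).1.1 i) j.

Lemma exec_jt r :
  exec e F (fun i => i \in R) byzE r = (jt r).1.1 /\
  exec e NL (fun _ => false) byz0 r = (jt r).1.2 /\
  exec e NR (fun _ => true) byz0 r = (jt r).2.
Proof.
elim: r => [|r [IH1 [IH2 IH3]]] //=.
rewrite /byzE /byz0 /=.
case: (jt r) IH1 IH2 IH3 => [[s s0] s1] /= -> -> ->; by [].
Qed.

Hypothesis FNL : forall i, i \in F -> i \notin NL.
Hypothesis FNR : forall i, i \in F -> i \notin NR.
Hypothesis LNL : forall i j, j \in L -> e i j -> i \notin F -> i \notin NL -> i \in L.
Hypothesis RNR : forall i j, j \in R -> e i j -> i \notin F -> i \notin NR -> i \in R.
Hypothesis LR : forall j, j \in L -> j \notin R.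

Lemma simL r : forall j, j \in L -> (jt r).1.1 j = (jt r).1.2 j.
Proof.
elim: r => [|r IH] j jL /=.
  by rewrite (negbTE (LR j jL)).
move: IH; case: (jt r) => [[s s0] s1] /= IH.
rewrite IH //; congr (trans _ _ _ _); apply: functional_extensionality => i.
case eij: (e i j) => //; congr Some.
case iF: (i \in F).
  by rewrite /bE jL (negbTE (FNL i iF)).
case iN: (i \in NL) => //.
by rewrite IH // (LNL i j jL eij) ?iF ?iN.
Qed.

Lemma simR r : forall j, j \in R -> (jt r).1.1 j = (jt r).2 j.
Proof.
elim: r => [|r IH] j jR /=.
  by rewrite jR.
move: IH; case: (jt r) => [[s s0] s1] /= IH.
rewrite IH //; congr (trans _ _ _ _); apply: functional_extensionality => i.
case eij: (e i j) => //; congr Some.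
case iF: (i \in F).
  have jL : j \in L = false by apply/negP => /LR; rewrite jR.
  by rewrite /bE jL jR (negbTE (FNR i iF)).
case iN: (i \in NR) => //.
by rewrite IH // (RNR i j jR eij) ?iF ?iN.
Qed.

End Sim.

Theorem theorem3 (V : finType) (e : rel V) (f : nat) :
  (forall i, ~~ e i i) ->
  2 <= #|V| ->
  consensus_possible e f ->
  forall L C R F : {set V},
    [disjoint L & C] -> [disjoint L & R] -> [disjoint L & F] ->
    [disjoint C & R] -> [disjoint C & F] -> [disjoint R & F] ->
    L :|: C :|: R :|: F = [set: V] ->
    L != set0 -> R != set0 -> #|F| <= f ->
    reaches e f (L :|: C) R \/ reaches e f (R :|: C) L.
Proof.
move=> _ _ [A HA] L C R F dLC dLR dLF dCR dCF dRF cov.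
case/set0Pn => l lL; case/set0Pn => rr rR Ff.
rewrite /reaches.
set NR := [set i in L :|: C | [exists j in R, e i j]].
set NL := [set i in R :|: C | [exists j in L, e i j]].
case: (ltnP f #|NR|) => hR; first by left.
case: (ltnP f #|NL|) => hL; first by right.
exfalso.
pose d := @send V A l 0 (@init V A l false) l.
have inall : forall i, [\/ i \in L, i \in C, i \in R | i \in F].
  move=> i; have : i \in [set: V] by rewrite inE.
  by rewrite -cov !inE -!orbA => /or4P.
have FNL : forall i, i \in F -> i \notin NL.
  move=> i iF; rewrite !inE (disjointFl dRF iF) (disjointFl dCF iF) //.
have FNR : forall i, i \in F -> i \notin NR.
  move=> i iF; rewrite !inE (disjointFl dLF iF) (disjointFl dCF iF) //.
have LR : forall j, j \in L -> j \notin R by move=> j jL; rewrite (disjointFr dLR jL).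
have LNL : forall i j, j \in L -> e i j -> i \notin F -> i \notin NL -> i \in L.
  move=> i j jL eij iF iN; case: (inall i) => // iX.
  - by move: iN; rewrite !inE iX orbT /=; case/existsP; exists j; rewrite jL.
  - by move: iN; rewrite !inE iX /=; case/existsP; exists j; rewrite jL.
  - by rewrite iX in iF.
have RNR : forall i j, j \in R -> e i j -> i \notin F -> i \notin NR -> i \in R.
  move=> i j jR eij iF iN; case: (inall i) => // iX.
  - by move: iN; rewrite !inE iX /=; case/existsP; exists j; rewrite jR.
  - by move: iN; rewrite !inE iX orbT /=; case/existsP; exists j; rewrite jR.
  - by rewrite iX in iF.
have [agE [_ termE]] := HA F (fun i => i \in R) (@byzE V e A L R F NL NR d) Ff.
have [_ [val0 _]] := HA NL (fun _ => false) (@byz0 V e A L R F NL NR d) hL.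
have [_ [val1 _]] := HA NR (fun _ => true) (@byz0 V e A L R F NL NR d) hR.
have lF : l \notin F by rewrite (disjointFr dLF lL).
have rF : rr \notin F by rewrite (disjointFr dRF rR).
have lN : l \notin NL by rewrite !inE (disjointFr dLR lL) (disjointFr dLC lL).
have rN : rr \notin NR by rewrite !inE (disjointFl dLR rR) (disjointFl dCR rR).
have [r1 [v1 o1]] := termE l lF.
have [r2 [v2 o2]] := termE rr rF.
have o1' : outputs_at e NL (fun _ => false) (@byz0 V e A L R F NL NR d) l r1 v1.
  move: o1; rewrite /outputs_at.
  have [E1 [E2 _]] := @exec_jt V e A L R F NL NR d r1.
  rewrite E1 E2 simL // => -[D H]; split=> // r' lr'.
  have [E1' [E2' _]] := @exec_jt V e A L R F NL NR d r'.
  by rewrite E2' -simL // -E1'; apply: H.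
have o2' : outputs_at e NR (fun _ => true) (@byz0 V e A L R F NL NR d) rr r2 v2.
  move: o2; rewrite /outputs_at.
  have [E1 [_ E3]] := @exec_jt V e A L R F NL NR d r2.
  rewrite E1 E3 simR // => -[D H]; split=> // r' lr'.
  have [E1' [_ E3']] := @exec_jt V e A L R F NL NR d r'.
  by rewrite E3' -simR // -E1'; apply: H.
have [k _ /= ?] := val0 l r1 v1 lN o1'; subst v1.
have [k' _ /= ?] := val1 rr r2 v2 rN o2'; subst v2.
by have := agE l rr r1 r2 false true lF rF o1 o2.
Qed.
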